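(* Let $\Bbbk$ be a field, $R=\Bbbk[x_1,\dots,x_m]$ with the standard $\mathbb Z^m$-grading, and let $\mathcal F_\bullet$ be a $\mathbb Z^m$-graded minimal free resolution of a finitely generated $\mathbb Z^m$-graded $R$-module $M$, with differentials $f_n$ and $f_0\colon F_0\to M$ the augmentation. Let $B=\coprod_n B_n$ be a basis of $\mathcal F_\bullet$ consisting of homogeneous elements. Let $\overline{\mathcal F}_\bullet=\mathcal F_\bullet\otimes_R R/(x_1-1,\dots,x_m-1)$ (a complex of $\Bbbk$-vector spaces with differentials $\bar f_n$, and $\bar f_0\colon\overline F_0\to H_0(\overline{\mathcal F}_\bullet)$ the canonical projection), and let $\overline B$ be the basis of $\overline{\mathcal F}_\bullet$ induced by $B$. Then: (a) for each $n\ge1$ and each $\bar b\in\overline B_n$ one has $\bar f_n(\bar b)\ne0$; (b) if $\overline B$ is a basis with minimal support for $\overline{\mathcal F}_\bullet$, then $B$ is a basis with minimal support for $\mathcal F_\bullet$; (c) if $B$ is a basis with minimal support for $\mathcal F_\bullet$ and $M$ is torsion-free, then $\overline B$ is a basis with minimal support for $\overline{\mathcal F}_\bullet$.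
   Context: Let $\mathcal F_\bullet: 0\leftarrow F_0\leftarrow F_1\leftarrow\cdots\leftarrow F_l\leftarrow0$ be a complex of free modules of finite rank over a ring, with differentials $f_n\colon F_n\to F_{n-1}$, and let $f_0\colon F_0\to H_0(\mathcal F_\bullet)$ be the canonical projection. Let $B_n$ be a basis of $F_n$ and $B=\coprod B_n$. For $y=\sum_{c\in B_n}a_cc\in F_n$, its support is $\operatorname{supp}y=\{c\in B_n: a_c\neq0\}$. An element $y\in F_n$ is a cycle with minimal support (relative to $B$) if $y\in\operatorname{Ker}f_n$ and $\operatorname{supp}y$ does not properly contain the support of any nonzero element of $\operatorname{Ker}f_n$. For $y\in F_n$, $n\ge1$, the boundary support of $y$ is $\operatorname{supp}f_n(y)$. $B$ is a basis with minimal support for $\mathcal F_\bullet$ if for every $n\ge1$ and every $b\in B_n$, $f_n(b)$ is a cycle with minimal support. A $\mathbb Z^m$-graded free resolution is minimal if its differentials are homogeneous of degree $0$ and $f_n(F_n)\subseteq\mathfrak m F_{n-1}$ for $n\ge1$, where $\mathfrak m=(x_1,\dots,x_m)$. *)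

(* Defs.v *)
From HB Require Import structures.
From mathcomp Require Import all_boot all_order all_algebra.
Set Implicit Arguments. Unset Strict Implicit. Unset Printing Implicit Defensive.
Import Order.TTheory GRing.Theory Num.Theory.
Local Open Scope ring_scope.

Fixpoint mpoly (k : fieldType) (m : nat) : idomainType :=
  if m is m'.+1 then {poly mpoly k m'} else k.

(* the variable x_i (i < m); for m' = m-1 the outermost 'X is x_{m-1} *)
Fixpoint mvar (k : fieldType) (m : nat) : nat -> mpoly k m :=
  match m return nat -> mpoly k m with
  | 0 => fun _ => 0
  | m'.+1 => fun i => if i == m' then 'X else (mvar k m' i)%:P
  end.

Fixpoint mconst (k : fieldType) (m : nat) (c : k) : mpoly k m :=
  match m return mpoly k m with
  | 0 => c
  | m'.+1 => (mconst m' c)%:P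
  end.

(* evaluation at x_1 = ... = x_m = 1, i.e. the canonical map
   R -> R/(x_1 - 1, ..., x_m - 1) = k *)
Fixpoint mev (k : fieldType) (m : nat) : mpoly k m -> k :=
  match m return mpoly k m -> k with
  | 0 => fun p => p
  | m'.+1 => fun p => mev p.[1]
  end.

Definition mono (k : fieldType) (m : nat) (e : 'I_m -> nat) : mpoly k m :=
  \prod_(i < m) mvar k m i ^+ e i.

(* p is homogeneous of degree a in Z^m : p lies in the graded piece R_a,
   which is k * x^a if a is in N^m and 0 otherwise *)
Definition mhomog (k : fieldType) (m : nat) (p : mpoly k m) (a : 'I_m -> int) : Prop :=
  p = 0 \/
  exists e : 'I_m -> nat, (forall i, (e i)%:Z = a i) /\ exists c : k, p = mconst m c * mono k e.

Definition in_maxideal (k : fieldType) (m : nat) (p : mpoly k m) : Prop :=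
  exists g : 'I_m -> mpoly k m, p = \sum_(i < m) g i * mvar k m i.

(* F_n = A^(r n) (row vectors), basis B_n = standard basis,
   D n : 'M_(r n.+1, r n) is the matrix of f_{n+1} : F_{n+1} -> F_n,
   i.e. f_{n+1}(y) = y *m D n; the basis element b_j of F_{n+1} maps to row j (D n).
   f_0 : F_0 -> H_0 is the canonical projection, with kernel Im f_1. *)

Definition is_complex (A : pzRingType) (r : nat -> nat)
  (D : forall n, 'M[A]_(r n.+1, r n)) : Prop :=
  forall n, D n.+1 *m D n = 0.

Definition exact_pos (A : pzRingType) (r : nat -> nat)
  (D : forall n, 'M[A]_(r n.+1, r n)) : Prop :=
  forall n (y : 'rV[A]_(r n.+1)), y *m D n = 0 -> exists z : 'rV[A]_(r n.+2), y = z *m D n.+1.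

Definition in_ker (A : pzRingType) (r : nat -> nat)
  (D : forall n, 'M[A]_(r n.+1, r n)) (n : nat) : 'rV[A]_(r n) -> Prop :=
  match n as n0 return 'rV[A]_(r n0) -> Prop with
  | 0 => fun y => exists z : 'rV[A]_(r 1), y = z *m D 0
  | k.+1 => fun y => y *m D k = 0
  end.

Definition supp (A : pzRingType) (N : nat) (y : 'rV[A]_N) : {set 'I_N} :=
  [set j | y 0 j != 0].

Definition min_support_cycle (A : pzRingType) (r : nat -> nat)
  (D : forall n, 'M[A]_(r n.+1, r n)) (n : nat) (y : 'rV[A]_(r n)) : Prop :=
  in_ker D y /\
  forall z : 'rV[A]_(r n), in_ker D z -> z != 0 -> ~ (supp z \proper supp y).

Definition min_support_basis (A : pzRingType) (r : nat -> nat)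
  (D : forall n, 'M[A]_(r n.+1, r n)) : Prop :=
  forall n (j : 'I_(r n.+1)), min_support_cycle D (row j (D n)).

(* ---------- Z^m-graded structure: the basis element j of F_n has degree deg n j;
   differentials homogeneous of degree 0 means the entry (j,i) of D n is homogeneous
   of degree deg (n+1) j - deg n i *)
Definition graded_cx (k : fieldType) (m : nat) (r : nat -> nat)
  (D : forall n, 'M[mpoly k m]_(r n.+1, r n)) (deg : forall n, 'I_(r n) -> 'I_m -> int) : Prop :=
  forall n (j : 'I_(r n.+1)) (i : 'I_(r n)),
    mhomog (D n j i) (fun t => deg n.+1 j t - deg n i t).

Definition minimal_cx (k : fieldType) (m : nat) (r : nat -> nat)
  (D : forall n, 'M[mpoly k m]_(r n.+1, r n)) : Prop :=
  forall n (j : 'I_(r n.+1)) (i : 'I_(r n)), in_maxideal (D n j i).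

(* M = H_0(F) = F_0 / Im f_1 is torsion-free *)
Definition coker_torsion_free (A : idomainType) (r : nat -> nat)
  (D : forall n, 'M[A]_(r n.+1, r n)) : Prop :=
  forall (a : A) (v : 'rV[A]_(r 0)), a != 0 ->
    (exists z : 'rV[A]_(r 1), a *: v = z *m D 0) -> exists z : 'rV[A]_(r 1), v = z *m D 0.

Definition bar_cx (k : fieldType) (m : nat) (r : nat -> nat)
  (D : forall n, 'M[mpoly k m]_(r n.+1, r n)) : forall n, 'M[k]_(r n.+1, r n) :=
  fun n => map_mx (@mev k m) (D n).

(* Main.v *)
Require Import Defs.
From HB Require Import structures.
From mathcomp Require Import all_boot all_order all_algebra.
From mathcomp Require Import zify.
From Stdlib Require Import FunctionalExtensionality.
Set Implicit Arguments. Unset Strict Implicit. Unset Printing Implicit Defensive.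
Import Order.TTheory GRing.Theory Num.Theory.
Local Open Scope ring_scope.

Section Basic.
Variable k : fieldType.

Fixpoint evc (m : nat) (c : k) : mpoly k m -> k :=
  match m return mpoly k m -> k with
  | 0 => fun p => p
  | m'.+1 => fun p => evc c (p.[mconst m' c])
  end.

Lemma evcD m c (p q : mpoly k m) : evc c (p + q) = evc c p + evc c q.
Proof. elim: m c p q => [//|m IH] c p q /=. by rewrite hornerD IH. Qed.
Lemma evc0 m c : evc c (0 : mpoly k m) = 0.
Proof. elim: m => [//|m IH] /=. by rewrite horner0 IH. Qed.
Lemma evcM m c (p q : mpoly k m) : evc c (p * q) = evc c p * evc c q.
Proof. elim: m c p q => [//|m IH] c p q /=. by rewrite hornerM IH. Qed.
Lemma evc1 m c : evc c (1 : mpoly k m) = 1.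
Proof. elim: m => [//|m IH] /=. by rewrite hornerC IH. Qed.
Lemma evcX m c (p : mpoly k m) n : evc c (p ^+ n) = evc c p ^+ n.
Proof. elim: n => [|n IH]; first by rewrite !expr0 evc1. by rewrite !exprS evcM IH. Qed.
Lemma evc_sum m c I (r : seq I) (P : pred I) (F : I -> mpoly k m) :
  evc c (\sum_(i <- r | P i) F i) = \sum_(i <- r | P i) evc c (F i).
Proof. exact: (big_morph _ (@evcD m c) (@evc0 m c)). Qed.
Lemma evc_prod m c I (r : seq I) (P : pred I) (F : I -> mpoly k m) :
  evc c (\prod_(i <- r | P i) F i) = \prod_(i <- r | P i) evc c (F i).
Proof. exact: (big_morph _ (@evcM m c) (@evc1 m c)). Qed.
Lemma evc_mconst m c d : evc c (mconst m d) = d.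
Proof. elim: m => [//|m IH] /=. by rewrite hornerC IH. Qed.
Lemma evc_mvar m c (i : nat) : (i < m)%N -> evc c (mvar k m i) = c.
Proof.
elim: m i => [//|m IH] i /= lti.
case: eqP => [_|ne]; first by rewrite hornerX evc_mconst.
rewrite hornerC IH //. lia.
Qed.

Lemma mev_evc m (p : mpoly k m) : mev p = evc 1 p.
Proof.
elim: m p => [//|m IH] p /=. rewrite IH.
have -> : mconst m (1 : k) = 1 by elim: (m) => [//|m' IH'] /=; rewrite IH'.
by [].
Qed.

Lemma mconstD m (a b : k) : mconst m (a + b) = mconst m a + mconst m b.
Proof. elim: m => [//|m IH] /=. by rewrite IH polyCD. Qed.
Lemma mconst0 m : mconst m (0 : k) = 0.
Proof. elim: m => [//|m IH] /=. by rewrite IH. Qed.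
Lemma mconstM m (a b : k) : mconst m (a * b) = mconst m a * mconst m b.
Proof. elim: m => [//|m IH] /=. by rewrite IH polyCM. Qed.
Lemma mconst_sum m I (r : seq I) (P : pred I) (F : I -> k) :
  mconst m (\sum_(i <- r | P i) F i) = \sum_(i <- r | P i) mconst m (F i).
Proof. exact: (big_morph _ (@mconstD m) (@mconst0 m)). Qed.

Lemma mono_add m (e1 e2 : 'I_m -> nat) :
  mono k (fun i => e1 i + e2 i)%N = mono k e1 * mono k e2.
Proof. rewrite /mono -big_split /=. apply: eq_bigr => i _. by rewrite exprD. Qed.
Lemma mono_ext m (e1 e2 : 'I_m -> nat) : (forall i, e1 i = e2 i) -> mono k e1 = mono k e2.
Proof. move=> H. by rewrite (functional_extensionality _ _ H). Qed.
Lemma evc_mono m c (e : 'I_m -> nat) : evc c (mono k e) = \prod_(i < m) c ^+ e i.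
Proof. rewrite /mono evc_prod. apply: eq_bigr => i _. by rewrite evcX evc_mvar. Qed.
Lemma mev_mono m (e : 'I_m -> nat) : mev (mono k e) = 1.
Proof. rewrite mev_evc evc_mono. apply: big1 => i _. by rewrite expr1n. Qed.
Lemma mev_term m c (e : 'I_m -> nat) : mev (mconst m c * mono k e) = c.
Proof. by rewrite mev_evc evcM evc_mconst -mev_evc mev_mono mulr1. Qed.

Lemma mono_rec m (e : 'I_m.+1 -> nat) :
  mono k e = (mono k (fun i : 'I_m => e (widen_ord (leqnSn m) i)))%:P * 'X^(e ord_max).
Proof.
rewrite /mono big_ord_recr /=. congr (_ * _); last by rewrite eqxx.
rewrite (big_morph _ (@polyCM _) (@polyC1 _)). apply: eq_bigr => i _.
rewrite (_ : (widen_ord (leqnSn m) i : nat) == m = false); last by apply/negbTE; rewrite neq_ltn /= ltn_ord.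
by rewrite rmorphXn.
Qed.

Fixpoint mcoef (m : nat) : ('I_m -> nat) -> mpoly k m -> k :=
  match m return ('I_m -> nat) -> mpoly k m -> k with
  | 0 => fun E p => p
  | m'.+1 => fun E p => mcoef (fun i => E (widen_ord (leqnSn m') i)) (p`_(E ord_max))
  end.

Lemma mcoefD m E (p q : mpoly k m) : mcoef E (p + q) = mcoef E p + mcoef E q.
Proof. elim: m E p q => [//|m IH] E p q /=. by rewrite coefD IH. Qed.
Lemma mcoef0 m E : mcoef E (0 : mpoly k m) = 0.
Proof. elim: m E => [//|m IH] E /=. by rewrite coef0 IH. Qed.

Lemma forall_rec m (P : 'I_m.+1 -> bool) :
  [forall i, P i] = P ord_max && [forall i : 'I_m, P (widen_ord (leqnSn m) i)].
Proof.
apply/forallP/andP => [H|[H1 /forallP H2] i]; first by split => //; apply/forallP.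
case: (unliftP ord_max i) => [j ->|->] //.
have -> : lift ord_max j = widen_ord (leqnSn m) j by apply: val_inj => /=; rewrite /bump leqNgt ltn_ord.
exact: H2.
Qed.

Lemma mcoef_term m E e (p : mpoly k m) d :
  mcoef E (p * (mconst m d * mono k e)) =
  if [forall i, e i <= E i]%N then mcoef (fun i => E i - e i)%N p * d else 0.
Proof.
elim: m E e p d => [|m IH] E e p d /=.
  by rewrite /mono big_ord0 mulr1 (_ : [forall i, _] = true) //; apply/forallP => -[].
rewrite mono_rec forall_rec.
rewrite (_ : p * ((mconst m d)%:P * ((mono k _)%:P * 'X^(e ord_max))) =
   (p * (mconst m d * mono k (fun i : 'I_m => e (widen_ord (leqnSn m) i)))%:P) * 'X^(e ord_max));
  last by rewrite polyCM !mulrA.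
rewrite coefMXn ltnNge. case: (e ord_max <= E ord_max)%N => /=; last by rewrite mcoef0.
by rewrite coefMC IH.
Qed.

Lemma mcoef_nz m (p : mpoly k m) : p != 0 -> exists E, mcoef E p != 0.
Proof.
elim: m p => [|m IH] p /= pn0; first by exists (fun _ => 0%N).
have : p`_(size p).-1 != 0 by rewrite -lead_coefE lead_coef_eq0.
move/IH => [E HE].
exists (fun i : 'I_m.+1 => oapp E (size p).-1 (insub (val i) : option 'I_m)).
rewrite /= insubN ?ltnn //=.
rewrite (_ : (fun i : 'I_m => _) = E) //.
apply: functional_extensionality => i. rewrite /=. case: insubP => [j _ /val_inj -> //|]. by rewrite /= ltn_ord.
Qed.

Definition nng m (b : 'I_m -> int) := [forall t, 0 <= b t].
Definition tm m (b : 'I_m -> int) (c : k) : mpoly k m :=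
  if nng b then mconst m c * mono k (fun t => absz (b t)) else 0.

Lemma tm0 m (b : 'I_m -> int) : tm b 0 = 0.
Proof. by rewrite /tm mconst0 mul0r; case: ifP. Qed.
Lemma tmD m (b : 'I_m -> int) x y : tm b (x + y) = tm b x + tm b y.
Proof. rewrite /tm; case: ifP => _; last by rewrite addr0. by rewrite mconstD mulrDl. Qed.
Lemma tm_sum m (b : 'I_m -> int) I (r : seq I) (P : pred I) (F : I -> k) :
  tm b (\sum_(i <- r | P i) F i) = \sum_(i <- r | P i) tm b (F i).
Proof. exact: (big_morph _ (@tmD m b) (@tm0 m b)). Qed.
Lemma mev0 m : mev (0 : mpoly k m) = 0.
Proof. by rewrite mev_evc evc0. Qed.
Lemma mev_tm m (b : 'I_m -> int) c : mev (tm b c) = if nng b then c else 0.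
Proof. rewrite /tm; case: ifP => _; by [rewrite mev_term | rewrite mev0]. Qed.

Definition termlike m (y : mpoly k m) := exists e, y = mconst m (mev y) * mono k e.
Lemma termlike_eq0 m (y : mpoly k m) : termlike y -> (y == 0) = (mev y == 0).
Proof.
move=> [e He]; apply/eqP/eqP => [->|H]; first exact: mev0.
by rewrite He H mconst0 mul0r.
Qed.
Lemma tm_termlike m (b : 'I_m -> int) c : termlike (tm b c).
Proof.
exists (fun t => absz (b t)); rewrite mev_tm /tm; case: ifP => _ //.
by rewrite mconst0 mul0r.
Qed.
Lemma mhomog_termlike m (y : mpoly k m) d : mhomog y d -> termlike y.
Proof.
case=> [->|[e [He [c ->]]]]; last by exists e; rewrite mev_term.
by exists (fun _ => 0%N); rewrite mev0 mconst0 mul0r.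
Qed.

Lemma tm_mul m (b : 'I_m -> int) c (y : mpoly k m) d :
  nng b -> mhomog y d -> tm b c * y = tm (fun t => b t + d t) (c * mev y).
Proof.
move=> nb; case=> [->|[e [He [c' ->]]]]; first by rewrite mulr0 mev0 mulr0 tm0.
have nb' : nng (fun t => b t + d t).
  apply/forallP => t; move/forallP: nb => /(_ t); rewrite -He. lia.
rewrite /tm nb nb' mev_term mconstM mulrACA -mono_add.
congr (_ * _); apply: mono_ext => t.
move/forallP: nb => /(_ t); rewrite -He. lia.
Qed.

Definition hcomp m (b : 'I_m -> int) (x : mpoly k m) := tm b (mcoef (fun t => absz (b t)) x).

Lemma hcompD m (b : 'I_m -> int) x y : hcomp b (x + y) = hcomp b x + hcomp b y.
Proof. by rewrite /hcomp mcoefD tmD. Qed.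
Lemma hcomp0 m (b : 'I_m -> int) : hcomp b 0 = 0.
Proof. by rewrite /hcomp mcoef0 tm0. Qed.
Lemma hcomp_sum m (b : 'I_m -> int) I (r : seq I) (P : pred I) (F : I -> mpoly k m) :
  hcomp b (\sum_(i <- r | P i) F i) = \sum_(i <- r | P i) hcomp b (F i).
Proof. exact: (big_morph _ (@hcompD m b) (@hcomp0 m b)). Qed.

Lemma hcomp_mul m (b : 'I_m -> int) x (y : mpoly k m) d :
  mhomog y d -> hcomp b (x * y) = hcomp (fun t => b t - d t) x * y.
Proof.
move=> hy; case: (hy) => [->|[e [He [c Hy]]]]; first by rewrite !mulr0 hcomp0.
rewrite /hcomp.
case nb : (nng b).
- rewrite Hy mcoef_term.
  case: ifP => le.
  + have nbd : nng (fun t => b t - d t).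
      apply/forallP => t; move/forallP: le => /(_ t); move/forallP: nb => /(_ t); rewrite -He. lia.
    rewrite -Hy (tm_mul _ nbd hy).
    have -> : (fun t => b t - d t + d t) = b by apply: functional_extensionality => t; lia.
    rewrite Hy mev_term. congr (tm _ (_ * _)). apply: congr2 => //.
    apply: functional_extensionality => t.
    move/forallP: le => /(_ t); move/forallP: nb => /(_ t); rewrite -He. lia.
  + rewrite tm0 /tm.
    case: ifP => [nbd|]; last by rewrite mul0r.
    exfalso; move/negbT: le; rewrite negb_forall => /existsP [t].
    move/forallP: nbd => /(_ t); move/forallP: nb => /(_ t); rewrite -He. lia.
- rewrite {1}/tm nb /tm; case: ifP => [nbd|]; last by rewrite mul0r.
  exfalso; move/negbT: nb; rewrite negb_forall => /existsP [t].
  move/forallP: nbd => /(_ t); rewrite -He. lia.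
Qed.

Lemma mevD m (p q : mpoly k m) : mev (p + q) = mev p + mev q.
Proof. by rewrite !mev_evc evcD. Qed.
Lemma mevM m (p q : mpoly k m) : mev (p * q) = mev p * mev q.
Proof. by rewrite !mev_evc evcM. Qed.

Lemma mapmx_mul m p q s (A : 'M[mpoly k m]_(p, q)) (B : 'M[mpoly k m]_(q, s)) :
  map_mx (@mev k m) (A *m B) = map_mx (@mev k m) A *m map_mx (@mev k m) B.
Proof.
apply/matrixP => i j; rewrite !mxE mev_evc evc_sum; apply: eq_bigr => l _.
by rewrite !mxE evcM -!mev_evc.
Qed.
Lemma mapmx0 m p q : map_mx (@mev k m) (0 : 'M_(p, q)) = 0.
Proof. by apply/matrixP => i j; rewrite !mxE mev0. Qed.
Lemma maprow m p q (A : 'M[mpoly k m]_(p, q)) j :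
  map_mx (@mev k m) (row j A) = row j (map_mx (@mev k m) A).
Proof. by apply/matrixP => i l; rewrite !mxE. Qed.

Definition compv m (a : 'I_m -> int) p (d : 'I_p -> 'I_m -> int) (v : 'rV[mpoly k m]_p) : 'rV_p :=
  \row_j hcomp (fun t => a t - d j t) (v 0 j).
Definition liftv m (a : 'I_m -> int) p (d : 'I_p -> 'I_m -> int) (c : 'rV[k]_p) : 'rV[mpoly k m]_p :=
  \row_j tm (fun t => a t - d j t) (c 0 j).

Lemma compv_mul m a p q (M : 'M[mpoly k m]_(p, q)) dr dc v :
  (forall j l, mhomog (M j l) (fun t => dr j t - dc l t)) ->
  compv a dc (v *m M) = compv a dr v *m M.
Proof.
move=> H; apply/rowP => l; rewrite !mxE hcomp_sum; apply: eq_bigr => j _.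
rewrite !mxE (hcomp_mul _ _ (H j l)). congr (hcomp _ _ * _).
by apply: functional_extensionality => t; lia.
Qed.
Lemma compv0 m a p d : compv a d (0 : 'rV[mpoly k m]_p) = 0.
Proof. by apply/rowP => j; rewrite !mxE hcomp0. Qed.

Lemma liftv_mul m a p q (M : 'M[mpoly k m]_(p, q)) dr dc c :
  (forall j t, dr j t <= a t) ->
  (forall j l, mhomog (M j l) (fun t => dr j t - dc l t)) ->
  liftv a dr c *m M = liftv a dc (c *m map_mx (@mev k m) M).
Proof.
move=> Ha H; apply/rowP => l; rewrite !mxE tm_sum; apply: eq_bigr => j _.
rewrite !mxE (tm_mul _ _ (H j l)); last by apply/forallP => t; move: (Ha j t); lia.
congr (tm _ _). by apply: functional_extensionality => t; lia.
Qed.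
Lemma liftv0 m a p d : liftv a d (0 : 'rV[k]_p) = 0 :> 'rV[mpoly k m]_p.
Proof. by apply/rowP => j; rewrite !mxE tm0. Qed.
Lemma liftv_map m a p d (c : 'rV[k]_p) :
  (forall j t, d j t <= a t) -> map_mx (@mev k m) (liftv a d c) = c.
Proof.
move=> Ha; apply/rowP => j; rewrite !mxE mev_tm.
by rewrite (_ : nng _ = true) //; apply/forallP => t; move: (Ha j t); lia.
Qed.

Lemma supp_map m p (v : 'rV[mpoly k m]_p) :
  (forall i, termlike (v 0 i)) -> supp (map_mx (@mev k m) v) = supp v.
Proof. by move=> H; apply/setP => i; rewrite !inE mxE (termlike_eq0 (H i)). Qed.

Lemma bound_le p (F : 'I_p -> int) i : (forall j, 0 <= F j) -> F i <= \sum_j F j.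
Proof. by move=> H; rewrite (bigD1 i) //= lerDl sumr_ge0. Qed.
End Basic.

Section Main.
Variables (k : fieldType) (m : nat) (r : nat -> nat)
  (D : forall n, 'M[mpoly k m]_(r n.+1, r n)) (deg : forall n, 'I_(r n) -> 'I_m -> int).
Hypotheses (Hc : is_complex D) (Hg : graded_cx D deg).

Lemma partA : exact_pos D -> minimal_cx D ->
  forall n (j : 'I_(r n.+1)), row j (bar_cx D n) != 0.
Proof.
move=> Hex Hmin n j; apply/negP => /eqP H0.
have Hrow : row j (D n) = 0.
  apply/rowP => i; rewrite mxE; have := congr1 (fun v : 'rV[k]_(r n) => v 0 i) H0; rewrite !mxE => h.
  by apply/eqP; rewrite (termlike_eq0 (mhomog_termlike (@Hg n j i))) h.
have [z Hz] : exists z : 'rV_(r n.+2), delta_mx 0 j = z *m D n.+1 by apply: (Hex n); rewrite -rowE Hrow.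
have := congr1 (fun v : 'rV[mpoly k m]_(r n.+1) => evc 0 (v 0 j)) Hz; rewrite !mxE !eqxx /= evc_sum evc1.
rewrite big1 => [|l _]; first by move/eqP; rewrite oner_eq0.
have [g ->] := Hmin n.+1 l j.
rewrite evcM evc_sum big1 ?mulr0 // => i _.
by rewrite evcM evc_mvar ?mulr0.
Qed.

Lemma rowker n (j : 'I_(r n.+1)) : in_ker D (row j (D n)).
Proof.
case: n j => [|n] j /=; first by exists (delta_mx 0 j); rewrite rowE.
by rewrite -row_mul Hc row0.
Qed.

Lemma rowker_bar n (j : 'I_(r n.+1)) : in_ker (bar_cx D) (row j (bar_cx D n)).
Proof.
case: n j => [|n] j /=; first by exists (delta_mx 0 j); rewrite rowE.
by rewrite -row_mul /bar_cx -mapmx_mul Hc mapmx0 row0.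
Qed.

Lemma compv_ker n a (z : 'rV_(r n)) :
  in_ker D z -> in_ker (bar_cx D) (map_mx (@mev k m) (compv a (@deg n) z)).
Proof.
case: n z => [|n] z /=.
  move=> [w ->]; exists (map_mx (@mev k m) (compv a (@deg 1) w)).
  by rewrite (compv_mul _ _ (@Hg 0)) mapmx_mul.
move=> Hz; rewrite /bar_cx -mapmx_mul -(compv_mul _ _ (@Hg n)) Hz compv0 mapmx0 //.
Qed.

Lemma liftv_ker n a (c : 'rV_(r n)) :
  (forall i t, @deg n i t <= a t) -> (forall i t, @deg n.+1 i t <= a t) ->
  in_ker (bar_cx D) c -> in_ker D (liftv a (@deg n) c).
Proof.
case: n c => [|n] c /= H0 H1.
  move=> [w ->]; exists (liftv a (@deg 1) w).
  by rewrite (liftv_mul _ H1 (@Hg 0)).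
move=> Hz; by rewrite (liftv_mul _ H0 (@Hg n)) -/(bar_cx D n) Hz liftv0.
Qed.

Lemma nz_entry N (z : 'rV[mpoly k m]_N) : z != 0 -> exists j0, z 0 j0 != 0.
Proof.
move=> zn0; case/boolP: [exists j0, z 0 j0 != 0] => [/existsP //|].
rewrite negb_exists => /forallP H; case/eqP: zn0; apply/rowP => i; rewrite mxE.
by apply/eqP; move: (H i); rewrite negbK.
Qed.

Lemma partB : min_support_basis (bar_cx D) -> min_support_basis D.
Proof.
move=> Hbar n j; split; first exact: rowker.
move=> z Hz zn0 Hprop.
have [j0 Hj0] := nz_entry zn0.
have [E HE] := mcoef_nz Hj0.
pose a := fun t => (E t)%:Z + @deg n j0 t.
pose z' := compv a (@deg n) z.
have Hy : forall i, termlike (row j (D n) 0 i) by move=> i; rewrite mxE; exact: mhomog_termlike (@Hg n j i).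
have Hz' : forall i, termlike (z' 0 i) by move=> i; rewrite mxE; exact: tm_termlike.
have nz' : map_mx (@mev k m) z' != 0.
  apply/eqP => /rowP /(_ j0); rewrite !mxE /hcomp mev_tm.
  have -> : (fun t => a t - @deg n j0 t) = (fun t => (E t)%:Z).
    by apply: functional_extensionality => t; rewrite /a; lia.
  rewrite (_ : nng _ = true); last by apply/forallP => t.
  rewrite (_ : (fun t => absz (a t - @deg n j0 t)) = E); last first.
    by apply: functional_extensionality => t; rewrite /a; lia.
  by move/eqP; rewrite (negbTE HE).
have sub : supp z' \subset supp z.
  apply/subsetP => i; rewrite !inE mxE; apply: contra => /eqP ->.
  by rewrite hcomp0.
apply: ((Hbar n j).2 _ (compv_ker a Hz) nz').
rewrite supp_map // -maprow supp_map //.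
exact: sub_proper_trans sub Hprop.
Qed.

Lemma partC : min_support_basis D -> min_support_basis (bar_cx D).
Proof.
move=> HB n j; split; first exact: rowker_bar.
move=> c Hc' cn0 Hprop.
pose a := fun t => \sum_i `|@deg n i t| + \sum_i `|@deg n.+1 i t|.
have H0 : forall i t, @deg n i t <= a t.
  move=> i t; apply: (le_trans (ler_norm _)); rewrite /a.
  apply: (le_trans (bound_le i (fun i => normr_ge0 (@deg n i t)))).
  by rewrite lerDl sumr_ge0.
have H1 : forall i t, @deg n.+1 i t <= a t.
  move=> i t; apply: (le_trans (ler_norm _)); rewrite /a.
  apply: (le_trans (bound_le i (fun i => normr_ge0 (@deg n.+1 i t)))).
  by rewrite lerDr sumr_ge0.
pose z := liftv a (@deg n) c : 'rV[mpoly k m]_(r n).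
have Hz : forall i, termlike (z 0 i) by move=> i; rewrite mxE; exact: tm_termlike.
have Hy : forall i, termlike (row j (D n) 0 i) by move=> i; rewrite mxE; exact: mhomog_termlike (@Hg n j i).
have zn0 : z != 0.
  apply: contraNneq cn0 => z0. by rewrite -(liftv_map (m:=m) c H0) -/z z0 mapmx0.
apply: ((HB n j).2 z (liftv_ker H0 H1 Hc') zn0).
rewrite -(supp_map Hz) -(supp_map Hy) maprow liftv_map //.
Qed.
End Main.

Theorem mainTheorem4 (k : fieldType) (m : nat) (r : nat -> nat) (l : nat)
    (D : forall n, 'M[mpoly k m]_(r n.+1, r n))
    (deg : forall n, 'I_(r n) -> 'I_m -> int) :
  (forall n, (l < n)%N -> r n = 0%N) ->
  is_complex D -> exact_pos D -> graded_cx D deg -> minimal_cx D ->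
  [/\ (forall n (j : 'I_(r n.+1)), row j (bar_cx D n) != 0),
      (min_support_basis (bar_cx D) -> min_support_basis D) &
      (min_support_basis D -> coker_torsion_free D -> min_support_basis (bar_cx D))].
Proof.
move=> _ Hc Hex Hg Hmin; split.
- exact: partA.
- exact: partB.
- move=> HB _; exact: partC.
Qed.
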